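(* Let $K$ be a compact Hausdorff space and $K'$ its Cantor--Bendixson derivative. If $K'$ has the extension property and $K'$ admits an extension operator in $K$, then $K$ has the extension property.
   Context: $K'$ denotes the set of non-isolated points of $K$. $C(K)$ is the Banach space of real-valued continuous functions on $K$ with the supremum norm. For a closed $F\subseteq K$, an extension operator for $F$ in $K$ is a bounded linear map $E:C(F)\to C(K)$ with $E(f)|_F=f$ for all $f\in C(F)$. A compact space has the extension property if every nonempty closed subset admits an extension operator in it. *)

(* Defs.v *)
From HB Require Import structures.
From mathcomp Require Import all_boot all_order all_algebra.
From mathcomp Require Import all_classical all_reals topology normedtype.
Set Implicit Arguments. Unset Strict Implicit. Unset Printing Implicit Defensive.
Import Order.TTheory GRing.Theory Num.Theory.
Import numFieldNormedType.Exports.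
Local Open Scope classical_set_scope.
Local Open Scope ring_scope.

Definition derived_set (K : topologicalType) : set K :=
  ~` isolated [set: K].

(* An element of C(A) (A a subset of T viewed as a subspace) is represented by
   any f : T -> R that is continuous on the subspace A; two representatives
   denote the same element of C(A) iff they agree on A.
   [ext_operator S F E] : E induces a bounded linear operator C(F) -> C(S)
   with E(f)|_F = f  (an extension operator for F in S). *)
Definition ext_operator (R : realType) (T : topologicalType) (S F : set T)
    (E : (T -> R) -> (T -> R)) : Prop :=
  F `<=` S /\
  [/\
    (forall f, {within F, continuous f} -> {within S, continuous (E f)}),
    (forall f g, {within F, continuous f} -> {within F, continuous g} ->
      (forall y, F y -> f y = g y) -> forall x, S x -> E f x = E g x),
    (forall (a : R) f g, {within F, continuous f} -> {within F, continuous g} ->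
      forall x, S x -> E (fun y => a * f y + g y) x = a * E f x + E g x),
    (* bounded for the sup norms: ||E f||_S <= M ||f||_F *)
    (exists M : R, forall f (c : R), {within F, continuous f} -> 0 <= c ->
      (forall y, F y -> `|f y| <= c) -> forall x, S x -> `|E f x| <= M * c)
  &
    (forall f, {within F, continuous f} -> forall x, F x -> E f x = f x)].

Definition ext_property (R : realType) (T : topologicalType) (S : set T) : Prop :=
  forall F : set T, F `<=` S -> F !=set0 ->
    (exists G : set T, closed G /\ F = G `&` S) ->
    exists E : (T -> R) -> (T -> R), ext_operator S F E.

(* Main.v *)
Require Import Defs.
From HB Require Import structures.
From mathcomp Require Import all_boot all_order all_algebra.
From mathcomp Require Import all_classical all_reals topology normedtype.
Import Order.TTheory GRing.Theory Num.Theory.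
Import numFieldNormedType.Exports.
Local Open Scope classical_set_scope.
Local Open Scope ring_scope.
From mathcomp Require Import lra.

Lemma lin_within (R : realType) (T : topologicalType) (A : set T) (a : R) (f g : T -> R) :
  {within A, continuous f} -> {within A, continuous g} ->
  {within A, continuous (fun y => a * f y + g y)}.
Proof.
move=> hf hg x.
apply: (@continuousD R R^o (subspace A) (fun y => a * f y) g x); last exact: hg.
apply: (@continuousM R (subspace A) (fun=> a) f x); last exact: hf.
exact: cst_continuous.
Qed.

Lemma within_at (T U : topologicalType) (A : set T) (f : T -> U) x :
  {within A, continuous f} -> A x ->
  forall V, nbhs (f x) V -> nbhs x (fun y => A y -> V (f y)).
Proof. by move=> /subspace_continuousP h Ax V hV; exact: (h x Ax V hV). Qed.

Lemma at_within (T U : topologicalType) (A : set T) (f : T -> U) :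
  (forall x V, nbhs (f x) V -> nbhs x (fun y => V (f y))) ->
  {within A, continuous f}.
Proof. by move=> h; apply: continuous_subspaceT => x V hV; exact: h. Qed.
Arguments lin_within {R T A} a {f g}.
Arguments within_at {T U A f x}.
Arguments at_within {T U} A {f}.
Definition goodG (R : realType) (K : topologicalType) (F P : set K)
  (G : (K -> R) -> (K -> R)) :=
  [/\ (forall f, {within F, continuous f} -> forall x V, nbhs (G f x) V ->
          nbhs x (fun y => V (G f y))),
      (forall f, {within F, continuous f} -> forall x, P x -> G f x = f x),
      (forall f g, {within F, continuous f} -> {within F, continuous g} ->
         (forall y, F y -> f y = g y) -> forall x, G f x = G g x),
      (forall (a : R) f g, {within F, continuous f} -> {within F, continuous g} ->
         forall x, G (fun y => a * f y + g y) x = a * G f x + G g x)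
    & exists M : R, 0 <= M /\ forall f (c : R), {within F, continuous f} -> 0 <= c ->
      (forall y, F y -> `|f y| <= c) -> forall x, `|G f x| <= M * c].

Lemma goodG_ex (R : realType) (K : topologicalType) (F : set K) :
  closed F ->
  ext_property R (@derived_set K) ->
  (exists E : (K -> R) -> (K -> R), ext_operator [set: K] (@derived_set K) E) ->
  exists G, @goodG R K F (F `&` @derived_set K) G.
Proof.
move=> cF hD [E0 [_ [E0c E0w E0l [M0 E0b] E0e]]].
have [ne|em] := pselect ((F `&` @derived_set K) !=set0); last first.
  exists (fun _ _ => 0); split.
  - move=> f _ x V hV; apply: filterE => y /=.
    exact: (nbhs_singleton hV).
  - by move=> f _ x Px; exfalso; apply: em; exists x.
  - by [].
  - by move=> a f g _ _ x; rewrite mulr0 addr0.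
  - by exists 0; split => // f c _ _ _ x; rewrite normr0 mul0r.
have [E1 [_ [E1c E1w E1l [M1 E1b] E1e]]] :
    exists E1 : (K -> R) -> (K -> R), ext_operator (@derived_set K) (F `&` @derived_set K) E1.
  apply: hD; [by move=> x [] | exact: ne | by exists F].
have sub : F `&` @derived_set K `<=` F by move=> x [].
have cw (f : K -> R) : {within F, continuous f} -> {within F `&` @derived_set K, continuous f}.
  by move=> hf; exact: (continuous_subspaceW sub hf).
exists (fun f => E0 (E1 f)); split.
- move=> f hf x V hV.
  have := within_at (E0c _ (E1c _ (cw _ hf))) (I : [set: K] x) _ hV.
  by apply: filterS => y; apply.
- move=> f hf x [Fx Dx]; rewrite E0e //; last exact: E1c (cw _ hf).
  rewrite E1e //; try exact: cw hf; by split.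
- move=> f g hf hg hfg x; apply: E0w => //.
  + exact: E1c (cw _ hf).
  + exact: E1c (cw _ hg).
  + move=> y Dy; apply: E1w => //; [exact: cw | exact: cw | by move=> z [Fz _]; apply: hfg].
- move=> a f g hf hg x.
  have c1 := E1c _ (cw _ hf); have c2 := E1c _ (cw _ hg).
  rewrite -E0l //; apply: E0w => //.
  + exact: E1c (cw _ (lin_within a hf hg)).
  + exact: lin_within.
  + by move=> y Dy; apply: E1l => //; exact: cw.
- exists (Num.max M0 0 * Num.max M1 0); split.
    by rewrite mulr_ge0 // le_max lexx orbT.
  move=> f c hf c0 hb x.
  have m1 : M1 <= Num.max M1 0 by rewrite le_max lexx.
  have m0 : M0 <= Num.max M0 0 by rewrite le_max lexx.
  have c1 : 0 <= Num.max M1 0 * c by rewrite mulr_ge0 // le_max lexx orbT.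
  have h1 : forall y, @derived_set K y -> `|E1 f y| <= Num.max M1 0 * c.
    move=> y Dy; apply: le_trans (E1b f c (cw _ hf) c0 _ y Dy) _.
      by move=> z [Fz _]; apply: hb.
    exact: ler_wpM2r.
  apply: le_trans (E0b (E1 f) _ (E1c _ (cw _ hf)) c1 h1 x I) _.
  by rewrite -mulrA; apply: ler_wpM2r.
Qed.
Local Close Scope ring_scope.
Theorem proposition3p8 (R : realType) (K : topologicalType) :
  compact [set: K] -> hausdorff_space K ->
  ext_property R (@derived_set K) ->
  (exists E : (K -> R) -> (K -> R), ext_operator [set: K] (@derived_set K) E) ->
  ext_property R [set: K].
Proof.
move=> _ _ hD hE F _ _ [G0 [cG0 hF]].
have cF : closed F by rewrite hF setIT.
have [G [Gc Ge Gw Gl [MG [MG0 Gb]]]] := @goodG_ex R K F cF hD hE.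
exists (fun f x => if pselect (F x) then f x else G f x).
split => //; split.
- move=> f hf; apply: at_within => x V.
  case: pselect => Fx /= hV.
  + have [Dx|nDx] := pselect (@derived_set K x).
      have h1 := within_at hf Fx _ hV.
      have h2 := Gc f hf x V ltac:(by rewrite Ge //; split).
      apply: filterS2 h1 h2 => y h1 h2.
      by case: pselect => Fy //; apply: h1.
    have [_ [U hU hUx]] : isolated [set: K] x by apply: contrapT.
    apply: filterS hU => y Uy.
    have : [set x] y by rewrite -hUx.
    move=> yx; rewrite yx; case: (pselect (F x)) => [?|//]; exact: nbhs_singleton hV.
  + have h1 : nbhs x (~` F) by apply: open_nbhs_nbhs; split => //; exact: closed_openC.
    have h2 := Gc f hf x V hV.
    apply: filterS2 h1 h2 => y nFy h2.
    by case: pselect.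
- move=> f g hf hg hfg x _; case: pselect => Fx; first exact: hfg.
  exact: Gw.
- move=> a f g hf hg x _; case: pselect => Fx //.
  exact: Gl.
- exists (1 + MG)%R => f c hf c0 hb x _.
  case: pselect => Fx.
    have := hb x Fx; nra.
  have := Gb f c hf c0 hb x; nra.
- by move=> f hf x Fx; case: pselect.
Qed.
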